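(* Let $q$ be an indeterminate, let $\mathcal W$ be the division algebra over $\mathbb{C}(q)$ generated by $U^{\pm1},V^{\pm1}$ subject to $VU=q^2UV$ (the fraction division algebra of this quantum torus), and let $f\in\mathbb{C}(q)(X)$ be a nonzero rational function such that the algebra homomorphism $\Psi:\mathcal W\to\mathcal W$ with $\Psi(U)=f(U)V$ and $\Psi(V)=U^{-1}$ is an isomorphism. Then $\Psi$ has period $5$ (i.e. $\Psi^5=\mathrm{id}$) if and only if $f(f(U)V)=V\,f(U^{-1}f(V^{-1}))\,U$ in $\mathcal W$.
   Context: For a rational function $f\in\mathbb{C}(q)(X)$ and an element $Y\in\mathcal W$, $f(Y)$ denotes the evaluation of $f$ at $Y$ in $\mathcal W$ (assumed well defined). *)

(* Defs.v *)
From HB Require Import structures.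
From mathcomp Require Import all_boot all_order all_algebra.
From mathcomp Require Import reals.
From mathcomp.real_closed Require Import complex.
Set Implicit Arguments. Unset Strict Implicit. Unset Printing Implicit Defensive.
Import Order.TTheory GRing.Theory Num.Theory.
Local Open Scope ring_scope.

Definition Cq (R : realType) : fieldType := {fraction {poly (R[i])}}.

Definition qind (R : realType) : Cq R := tofrac ('X : {poly R[i]}).

Definition peval (K : fieldType) (W : unitAlgType K) (p : {poly K}) (Y : W) : W :=
  (map_poly (in_alg W) p).[Y].

(* Evaluation of a rational function f = n/d in K(X) at Y in W:
   f(Y) := n(Y) * d(Y)^-1, computed on the stored representative (n,d) of f.
   When Y is transcendental over K (the case in which f(Y) is "well defined")
   this does not depend on the representative. *)
Definition feval (K : fieldType) (W : unitAlgType K) (f : {fraction {poly K}}) (Y : W) : W :=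
  peval (\n_(repr f)) Y * (peval (\d_(repr f)) Y)^-1.

Definition is_division_ring (T : unitRingType) : Prop :=
  forall x : T, x != 0 -> x \is a GRing.unit.

Definition div_generated (K : fieldType) (W : unitAlgType K) (U V : W) : Prop :=
  forall S : W -> Prop,
    (forall k : K, S (k%:A)) ->
    (forall x y, S x -> S y -> S (x + y)) ->
    (forall x, S x -> S (- x)) ->
    (forall x y, S x -> S y -> S (x * y)) ->
    (forall x, S x -> S (x^-1)) ->
    S U -> S V -> forall x, S x.

(* The monomials U^i V^j (i, j >= 0) are linearly independent over K, i.e. the
   quantum plane K<U,V>/(VU - q^2 UV) embeds in W (hence so does the quantum
   torus, after multiplying by U^n on the left and V^n on the right). *)
Definition monomials_free (K : fieldType) (W : unitAlgType K) (U V : W) : Prop :=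
  forall (n : nat) (c : 'I_n -> 'I_n -> K),
    \sum_(i < n) \sum_(j < n) c i j *: (U ^+ i * V ^+ j) = 0 ->
    forall i j, c i j = 0.

Definition quantum_torus_frac (R : realType) (W : unitAlgType (Cq R)) (U V : W) : Prop :=
  [/\ is_division_ring W,
      V * U = (qind R ^+ 2) *: (U * V),
      monomials_free U V
    & div_generated U V].

(* Main.v *)
Require Import Defs.
From HB Require Import structures.
From mathcomp Require Import all_boot all_order all_algebra.
From mathcomp Require Import reals.
From mathcomp.real_closed Require Import complex.
Import Order.TTheory GRing.Theory Num.Theory.
Local Open Scope ring_scope.
Section S1.
Variable K : fieldType.
Lemma numer_neq0 (f : {fraction {poly K}}) : f != 0 -> \n_(repr f) != 0.
Proof.
apply: contra => /eqP H; apply/eqP.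
rewrite -[f]reprK.
have -> : (\pi_({fraction {poly K}}) (repr f))%qT = (\pi_({fraction {poly K}}) (ratio0 _))%qT.
  by apply/eqmodP; rewrite /= FracField.equivfE H mul0r /= mulr0.
rewrite /GRing.zero /= /FracField.tofrac /= -?lock /=.
apply/eqmodP; rewrite /= FracField.equivfE /=.
by rewrite numer_Ratio ?oner_neq0 // mul0r mulr0.
Qed.
End S1.

Section S.
Local Set Implicit Arguments.
Variable K : fieldType.
Variable W : unitAlgType K.

Lemma peval_sum (p : {poly K}) (Y : W) :
  peval p Y = \sum_(i < (size p).+1) p`_i *: Y ^+ i.
Proof.
rewrite /peval horner_coef size_map_poly [RHS]big_ord_recr /= nth_default // scale0r addr0.
apply: eq_bigr => i _. rewrite coef_map /= mulr_algl. done. Qed.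


Lemma peval_neq0 (U V : W) (p : {poly K}) : monomials_free U V -> p != 0 -> peval p U != 0.
Proof.
move=> HM; apply: contra => /eqP H0.
pose c := fun (i j : 'I_(size p).+1) => if j == ord0 then p`_i else 0.
have Hs : \sum_(i < (size p).+1) \sum_(j < (size p).+1) c i j *: (U ^+ i * V ^+ j) = peval p U.
  rewrite peval_sum; apply: eq_bigr => i _.
  rewrite big_ord_recl /c eqxx expr0 mulr1 big1 ?addr0 // => j _.
  by rewrite /c eq_sym (negbTE (neq_lift _ _)) scale0r.
rewrite H0 in Hs.
apply/eqP/polyP => i; rewrite coef0.
case: (ltnP i (size p).+1) => Hi; last by rewrite nth_default // ltnW.
by have := HM _ c Hs (Ordinal Hi) ord0; rewrite /c eqxx.
Qed.

Lemma morph_inv (Psi : {rmorphism W -> W}) : bijective Psi -> forall x, Psi (x^-1) = (Psi x)^-1.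
Proof.
move=> [g gK Kg] x.
have [xu|xnu] := boolP (x \is a GRing.unit); first by rewrite rmorphV.
rewrite (invr_out xnu) invr_out //; apply: contra xnu => /unitrP [w [H1 H2]].
apply/unitrP; exists (g w); split; apply: (can_inj gK).
  by rewrite rmorphM Kg H1 rmorph1.
by rewrite rmorphM Kg H2 rmorph1.
Qed.

Lemma morph_peval (Psi : {lrmorphism W -> W}) p Y : Psi (peval p Y) = peval p (Psi Y).
Proof.
rewrite /peval -horner_map -map_poly_comp; congr (_.[_]).
by apply: eq_map_poly => k /=; rewrite rmorph_alg.
Qed.

Lemma morph_feval (Psi : {lrmorphism W -> W}) f Y : bijective Psi ->
  Psi (feval f Y) = feval f (Psi Y).
Proof.
move=> Hb; rewrite /feval rmorphM morph_inv // -!(morph_peval Psi) //.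
Qed.
End S.

Theorem lemma11 (R : realType) (W : unitAlgType (Cq R)) (U V : W)
    (HW : quantum_torus_frac U V)
    (f : {fraction {poly (Cq R)}}) (Hf : f != 0)
    (Psi : {lrmorphism W -> W}) (Hbij : bijective Psi)
    (HPsiU : Psi U = feval f U * V) (HPsiV : Psi V = U^-1) :
  (forall x : W, Psi (Psi (Psi (Psi (Psi x)))) = x) <->
  feval f (feval f U * V) = V * feval f (U^-1 * feval f (V^-1)) * U.
Proof.
case: HW => Hdiv Hcomm HM Hgen.
have Hinj := bij_inj Hbij.
have Unz : U != 0.
  have := @peval_neq0 _ _ U V 'X HM (negbT (polyX_eq0 _)).
  by rewrite /peval map_polyX hornerX.
have Vnz : V != 0.
  apply/negP => /eqP V0.
  pose c := fun (i j : 'I_2) => if (i == ord0) && (j == ord_max) then (1 : Cq R) else 0.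
  have Hs : \sum_(i < 2) \sum_(j < 2) c i j *: (U ^+ i * V ^+ j) = 0.
    rewrite !big_ord_recl !big_ord0 /c /=.
    by rewrite !scale0r !addr0 add0r scale1r expr0 mul1r expr1 V0.
  by have := HM _ c Hs ord0 ord_max; rewrite /c /= => /eqP; rewrite oner_eq0.
have Uu := Hdiv _ Unz.
have Vu := Hdiv _ Vnz.
have fUu : feval f U \is a GRing.unit.
  rewrite /feval unitrMr ?unitrV; apply: Hdiv; apply: peval_neq0 HM _ => //.
    exact: denom_ratioP.
  exact: numer_neq0.
have PM : forall x y, Psi (x * y) = Psi x * Psi y by move=> x y; exact: rmorphM.
have PD : forall x y, Psi (x + y) = Psi x + Psi y by move=> x y; exact: rmorphD.
have PN : forall x, Psi (- x) = - Psi x by move=> x; exact: rmorphN.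
have PA : forall k, Psi (k%:A) = k%:A by move=> k; exact: rmorph_alg.
have PF := fun Y => @morph_feval _ _ Psi f Y Hbij.
have PI : forall x, Psi (x^-1) = (Psi x)^-1 by move=> x; exact: (@morph_inv _ _ Psi Hbij x).
set Y := V * feval f (U^-1 * feval f (V^-1)).
have P1 : Psi (Psi U) = feval f (feval f U * V) * U^-1.
  by rewrite HPsiU PM PF HPsiU HPsiV.
have PVi : Psi (V^-1) = U by rewrite PI HPsiV invrK.
have PUi : Psi (U^-1) = V^-1 * (feval f U)^-1 by rewrite PI HPsiU invrM.
have PW : Psi (U^-1 * feval f (V^-1)) = V^-1.
  by rewrite PM PUi PF PVi divrK.
have P3 : Psi (Psi (Psi Y)) = U.
  rewrite /Y PM HPsiV PF PW PM PUi PF PVi divrK //.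
have E : feval f (feval f U * V) = Y * U <-> Psi (Psi U) = Y.
  rewrite P1; split => [->|<-]; first by rewrite mulrK.
  by rewrite divrK.
split=> [H5|HC].
  apply: (proj2 E); apply: (Hinj); apply: (Hinj); apply: (Hinj).
  by rewrite P3 H5.
have H2 := proj1 E HC.
have H5U : Psi (Psi (Psi (Psi (Psi U)))) = U by rewrite H2 P3.
have H5V : Psi (Psi (Psi (Psi (Psi V)))) = V.
  apply: (Hinj); rewrite HPsiV !PI H5U //.
apply: Hgen => //.
- by move=> k; rewrite !PA.
- by move=> x y Hx Hy; rewrite !PD Hx Hy.
- by move=> x Hx; rewrite !PN Hx.
- by move=> x y Hx Hy; rewrite !PM Hx Hy.
- by move=> x Hx; rewrite !PI Hx.
Qed.
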